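(* Let $c,h,l,\alpha,\beta,c_1,h_1,l_1,\alpha_1,\beta_1\in\mathbb{C}$ and $\gamma,\gamma_1\in\mathbb{C}^*$. Then: (1) $L(c,h,l)\otimes A'(\alpha,\beta)^{\mathcal{D}}\cong L(c_1,h_1,l_1)\otimes A'(\alpha_1,\beta_1)^{\mathcal{D}}$ as $\mathcal{D}$-modules if and only if $(c,h,l)=(c_1,h_1,l_1)$, $\alpha-\alpha_1\in\mathbb{Z}$, and either $\beta=\beta_1$ or $\{\beta,\beta_1\}=\{0,-1\}$. (2) $L(c,h,l)\otimes A(\alpha,\beta,\gamma)\cong L(c_1,h_1,l_1)\otimes A(\alpha_1,\beta_1,\gamma_1)$ if and only if $(\beta,\gamma,c,h,l)=(\beta_1,\gamma_1,c_1,h_1,l_1)$ and $\alpha-\alpha_1\in\frac12\mathbb{Z}$. (3) $L(c,h,l)\otimes A(\alpha,\beta,\gamma)\not\cong L(c_1,h_1,l_1)\otimes A'(\alpha_1,\beta_1)^{\mathcal{D}}$.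
   Context: The mirror-twisted Heisenberg–Virasoro algebra $\mathcal{D}$ is the complex Lie algebra with basis $\{d_m,h_r,\mathbf{c},\mathbf{l}: m\in\mathbb{Z}, r\in\frac12+\mathbb{Z}\}$ and brackets $[d_m,d_n]=(m-n)d_{m+n}+\frac{m^3-m}{12}\delta_{m+n,0}\mathbf{c}$, $[d_m,h_r]=-rh_{m+r}$, $[h_r,h_s]=r\delta_{r+s,0}\mathbf{l}$, with $\mathbf{c},\mathbf{l}$ central. $\mathcal{V}=\mathrm{span}\{d_m,\mathbf{c}\}$ (Virasoro algebra), $\mathcal{H}=\mathrm{span}\{h_r,\mathbf{l}\}$. $\mathcal{D}^{+}=\mathrm{span}\{d_{n},h_{r}: n\in\mathbb{N}, r\in\frac12+\mathbb{Z}_{\ge0}\}$, $\mathcal{D}^0=\mathrm{span}\{d_0,\mathbf{c},\mathbf{l}\}$. $L(c,h,l)$ is the irreducible quotient of the Verma module $M(c,h,l)=U(\mathcal{D})\otimes_{U(\mathcal{D}^0\oplus\mathcal{D}^+)}\mathbb{C}\mathbf{1}$, where $d_0\mathbf{1}=h\mathbf{1}$, $\mathbf{c}\mathbf{1}=c\mathbf{1}$, $\mathbf{l}\mathbf{1}=l\mathbf{1}$, $\mathcal{D}^+\mathbf{1}=0$. $A(\alpha,\beta,\gamma)$ is the $\mathcal{D}$-module with basis $\{v_k:k\in\frac12\mathbb{Z}\}$ and $d_mv_k=(\alpha+\beta m-k)v_{m+k}$, $h_rv_n=v_{n+r}$ for $n\in\mathbb{Z}$, $h_rv_s=\gamma v_{r+s}$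 for $s\in\frac12+\mathbb{Z}$, $\mathbf{c},\mathbf{l}$ acting as $0$. $A(\alpha,\beta)$ is the $\mathcal{V}$-module with basis $\{v_k:k\in\mathbb{Z}\}$, $d_mv_k=(\alpha+\beta m-k)v_{m+k}$, $\mathbf{c}=0$; $A'(\alpha,\beta)$ is its unique nontrivial irreducible subquotient. For a $\mathcal{V}$-module $V$, $V^{\mathcal{D}}$ is $V$ with $\mathcal{H}$ acting as $0$. Tensor products carry the action $x(v\otimes w)=xv\otimes w+v\otimes xw$. *)

(* Defs.v *)
From HB Require Import structures.
From mathcomp Require Import all_boot all_order all_algebra.
From mathcomp Require Import boolp classical_sets functions.
From mathcomp Require Import complex.
From mathcomp Require Import Rstruct.

Set Implicit Arguments.
Unset Strict Implicit.
Unset Printing Implicit Defensive.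

Import GRing.Theory Num.Theory.
Local Open Scope ring_scope.

Definition C : numClosedFieldType := (Rdefinitions.R)[i].

(** * Actions of the mirror-twisted Heisenberg-Virasoro algebra D.
    Basis of D: d_m (m : int), h_r (r in 1/2 + Z), c, l.
    Convention: [hop k] is the operator of h_(k + 1/2), k : int. *)
Record Dact (V : lmodType C) := DAct {
  dop : int -> V -> V;
  hop : int -> V -> V;
  cop : V -> V;
  lop : V -> V
}.

Definition half (k : int) : C := k%:~R + 2^-1.

Definition comm (V : lmodType C) (x y : V -> V) (v : V) : V := x (y v) - y (x v).

Definition is_Dmodule (V : lmodType C) (a : Dact V) : Prop :=
  [/\ (forall m, linear (dop a m)), (forall k, linear (hop a k)),
      linear (cop a), linear (lop a) &
  [/\
      (forall (m n : int) v, comm (dop a m) (dop a n) v =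
         (m - n)%:~R *: dop a (m + n) v
         + (if m + n == 0 then ((m ^+ 3 - m)%:~R / 12%:R) *: cop a v else 0)),
      (forall (m k : int) v, comm (dop a m) (hop a k) v =
         - half k *: hop a (m + k) v),
      (forall (k j : int) v, comm (hop a k) (hop a j) v =
         (if k + j + 1 == 0 then half k *: lop a v else 0)),
      (forall m v, comm (cop a) (dop a m) v = 0) /\ (forall k v, comm (cop a) (hop a k) v = 0) &
      [/\ (forall m v, comm (lop a) (dop a m) v = 0), (forall k v, comm (lop a) (hop a k) v = 0)
        & (forall v, comm (cop a) (lop a) v = 0)]]].

Definition is_Dsubmodule (V : lmodType C) (a : Dact V) (W : V -> Prop) : Prop :=
  [/\ W 0, (forall u v, W u -> W v -> W (u + v)), (forall (z : C) v, W v -> W (z *: v)),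
      (forall m v, W v -> W (dop a m v)) &
      [/\ (forall k v, W v -> W (hop a k v)), (forall v, W v -> W (cop a v))
        & (forall v, W v -> W (lop a v))]].

Definition irreducible_Dmod (V : lmodType C) (a : Dact V) : Prop :=
  (exists v : V, v != 0) /\
  forall W, is_Dsubmodule a W -> (forall v, W v -> v = 0) \/ (forall v, W v).

Definition hw_vector (V : lmodType C) (a : Dact V) (c h l : C) (v : V) : Prop :=
  [/\ v != 0, dop a 0 v = h *: v, cop a v = c *: v, lop a v = l *: v &
      (forall n : int, 0 < n -> dop a n v = 0) /\ (forall k : int, 0 <= k -> hop a k v = 0)].

(** Such a module is generated by that vector, hence is the
    irreducible quotient of the Verma module M(c,h,l). *)
Definition is_L (V : lmodType C) (a : Dact V) (c h l : C) : Prop :=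
  [/\ is_Dmodule a, irreducible_Dmod a & exists v, hw_vector a c h l v].

Definition Diso (V W : lmodType C) (a : Dact V) (b : Dact W) : Prop :=
  exists phi : {linear V -> W}, bijective phi /\
  [/\ (forall m v, phi (dop a m v) = dop b m (phi v)),
      (forall k v, phi (hop a k v) = hop b k (phi v)),
      (forall v, phi (cop a v) = cop b (phi v)) &
      (forall v, phi (lop a v) = lop b (phi v))].

(** V (x) A is realised as the space of finitely supported functions
    f : int -> V, f corresponding to sum_j f j (x) v_j.  The predicate [I]
    selects the admissible basis indices (those j with f j = 0 forced
    otherwise). *)
Section FinSupp.
Variables (V : lmodType C) (I : int -> Prop).

Definition fsupp_pred : {pred int -> V} := fun f =>
  `[< exists s : seq int, forall j, j \notin s -> f j = 0 >] &&
  `[< forall j, ~ I j -> f j = 0 >].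

Lemma fsupp_pred_submod : submod_closed fsupp_pred.
Proof.
split.
  apply/andP; split; apply/asboolP; first by exists [::].
  by [].
move=> z u v /andP[/asboolP[s Hs] /asboolP Hu] /andP[/asboolP[t Ht] /asboolP Hv].
apply/andP; split; apply/asboolP.
  exists (s ++ t) => j; rewrite mem_cat negb_or => /andP[js jt].
  by rewrite /GRing.add /GRing.scale /= Hs // Ht // scaler0 addr0.
by move=> j nj; rewrite /GRing.add /GRing.scale /= Hu // Hv // scaler0 addr0.
Qed.

HB.instance Definition _ := GRing.isSubmodClosed.Build C (int -> V) fsupp_pred
  fsupp_pred_submod.

Definition FS := {f : int -> V | fsupp_pred f}.
HB.instance Definition _ := [isSub for (@sval _ fsupp_pred : FS -> _)].
HB.instance Definition _ := [Choice of FS by <:].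
HB.instance Definition _ := [SubChoice_isSubLmodule of FS by <:].

(** lift an operator on raw functions to FS; the raw operators used below
    preserve [fsupp_pred] whenever the operators of V are linear, in which
    case this is just the restriction. *)
Definition fs_lift (F : (int -> V) -> (int -> V)) (f : FS) : FS :=
  insubd (0 : FS) (F (val f)).
End FinSupp.

Definition oddz (n : int) : bool := odd (absz n).

Definition allI : int -> Prop := fun=> True.

(** Basis v_(n/2) of A(al,be,ga) is indexed by n : int.
    d_m v_k = (al + be m - k) v_(m+k); h_r v_k = v_(k+r) for k in Z,
    h_r v_k = ga v_(k+r) for k in 1/2 + Z; c, l act as 0. *)
Definition tensA (V : lmodType C) (a : Dact V) (al be ga : C) : Dact (FS V allI) :=
  DAct
    (fun m => fs_lift (fun f j => dop a m (f j)
        + (al + be * m%:~R - (j - 2 * m)%:~R / 2%:R) *: f (j - 2 * m)))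
    (fun k => fs_lift (fun f j => hop a k (f j)
        + (if oddz (j - (2 * k + 1)) then ga else 1) *: f (j - (2 * k + 1))))
    (fs_lift (fun f j => cop a (f j)))
    (fs_lift (fun f j => lop a (f j))).

(** The index set of A'(al, be): A'(al,be) = A(al,be) unless al is an integer
    and be in {0,-1}; then A'(al,be) is the quotient A(al,0)/C v_al resp. the
    submodule span{v_k : k <> al} of A(al,-1).  In both cases it has basis
    {v_k : k <> al} with d_m v_k = (al + be m - k) v_(m+k) (read as 0 when
    m + k = al). *)
Definition idxA' (al be : C) : int -> Prop :=
  fun j => ~ (al = j%:~R /\ (be = 0 \/ be = -1)).

(** L (x) A'(al, be)^D : H acts as 0 on A'(al,be)^D, c acts as 0. *)
Definition tensA' (V : lmodType C) (a : Dact V) (al be : C) : Dact (FS V (idxA' al be)) :=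
  DAct
    (fun m => fs_lift (fun f j => dop a m (f j)
        + (if `[< idxA' al be j >] then (al + be * m%:~R - (j - m)%:~R) *: f (j - m)
           else 0)))
    (fun k => fs_lift (fun f j => hop a k (f j)))
    (fs_lift (fun f j => cop a (f j)))
    (fs_lift (fun f j => lop a (f j))).

(* Main.v *)
Require Import Defs.
From HB Require Import structures.
From mathcomp Require Import all_boot all_order all_algebra.
From mathcomp Require Import boolp classical_sets functions.
From mathcomp Require Import complex.
From mathcomp Require Import Rstruct.
From mathcomp Require Import zify ring lra.
Import GRing.Theory Num.Theory.
Local Open Scope ring_scope.

Module Helpers.
Import Order.TTheory.
Set Implicit Arguments. Unset Strict Implicit. Unset Printing Implicit Defensive.

Section Lin.
Variables (U U' : lmodType C) (T : U -> U') (HT : linear T).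
Lemma linD x y : T (x + y) = T x + T y.
Proof. by have := HT 1 x y; rewrite !scale1r. Qed.
Lemma lin0 : T 0 = 0.
Proof.
have E := linD 0 0; rewrite addr0 in E.
have : T 0 + T 0 - T 0 = T 0 - T 0 by rewrite -E.
by rewrite addrK subrr.
Qed.
Lemma linZ k x : T (k *: x) = k *: T x.
Proof. by have := HT k x 0; rewrite !addr0 lin0 addr0. Qed.
Lemma linN x : T (- x) = - T x.
Proof. by rewrite -scaleN1r linZ scaleN1r. Qed.
Lemma linB x y : T (x - y) = T x - T y.
Proof. by rewrite linD linN. Qed.
Lemma lin_sum (I : Type) (s : seq I) (F : I -> U) :
  T (\sum_(i <- s) F i) = \sum_(i <- s) T (F i).
Proof. by elim: s => [|x s IH]; rewrite ?big_nil ?lin0 // !big_cons linD IH. Qed.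
End Lin.

Lemma nat2_neq0 : (2%:R : C) != 0. Proof. by rewrite pnatr_eq0. Qed.

Lemma negz_C (M : nat) : ((Negz M)%:~R : C) = - (M.+1)%:R.
Proof. by rewrite NegzE mulrNz. Qed.

Section Gen.
Variables (W : lmodType C) (b : Dact W) (Hb : is_Dmodule b).

Lemma dopL m : linear (dop b m). Proof. by case: Hb. Qed.
Lemma hopL k : linear (hop b k). Proof. by case: Hb. Qed.
Lemma copL : linear (cop b). Proof. by case: Hb. Qed.
Lemma lopL : linear (lop b). Proof. by case: Hb. Qed.

Lemma comm_eq (x y : W -> W) v r : comm x y v = r -> x (y v) = y (x v) + r.
Proof. by rewrite /Defs.comm => <-; rewrite addrC subrK. Qed.

Lemma ddE m n v : dop b m (dop b n v) = dop b n (dop b m v) +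
  ((m - n)%:~R *: dop b (m + n) v
   + (if m + n == 0 then ((m ^+ 3 - m)%:~R / 12%:R) *: cop b v else 0)).
Proof. case: Hb => _ _ _ _ [DD _ _ _ _]; exact: comm_eq. Qed.
Lemma dhE m k v : dop b m (hop b k v) = hop b k (dop b m v) + - Defs.half k *: hop b (m + k) v.
Proof. case: Hb => _ _ _ _ [_ DH _ _ _]; exact: comm_eq. Qed.
Lemma hdE k m v : hop b k (dop b m v) = dop b m (hop b k v) + Defs.half k *: hop b (m + k) v.
Proof. by rewrite dhE scaleNr subrK. Qed.
Lemma hhE k j v : hop b k (hop b j v) = hop b j (hop b k v) +
  (if k + j + 1 == 0 then Defs.half k *: lop b v else 0).
Proof. case: Hb => _ _ _ _ [_ _ HH _ _]; exact: comm_eq. Qed.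
Lemma cdE m v : cop b (dop b m v) = dop b m (cop b v).
Proof. case: Hb => _ _ _ _ [_ _ _ [CD _] _]; by rewrite (comm_eq (CD m v)) addr0. Qed.
Lemma chE k v : cop b (hop b k v) = hop b k (cop b v).
Proof. case: Hb => _ _ _ _ [_ _ _ [_ CH] _]; by rewrite (comm_eq (CH k v)) addr0. Qed.
Lemma ldE m v : lop b (dop b m v) = dop b m (lop b v).
Proof. case: Hb => _ _ _ _ [_ _ _ _ [LD _ _]]; by rewrite (comm_eq (LD m v)) addr0. Qed.
Lemma lhE k v : lop b (hop b k v) = hop b k (lop b v).
Proof. case: Hb => _ _ _ _ [_ _ _ _ [_ LH _]]; by rewrite (comm_eq (LH k v)) addr0. Qed.

Lemma d_eig m y mu : m != 0 -> dop b 0 y = mu *: y ->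
  dop b 0 (dop b m y) = (mu - m%:~R) *: dop b m y.
Proof.
move=> m0 Hy; rewrite ddE Hy (linZ (dopL m)) !add0r (negbTE m0) addr0.
by rewrite mulrNz scaleNr scalerBl.
Qed.
Lemma h_eig k y mu : dop b 0 y = mu *: y ->
  dop b 0 (hop b k y) = (mu - Defs.half k) *: hop b k y.
Proof.
move=> Hy; rewrite dhE Hy (linZ (hopL k)) add0r scalerBl scaleNr.
by [].
Qed.

Variables (c h l : C) (w : W) (Hw : hw_vector b c h l w).

Inductive Nspan : W -> Prop :=
 | Nw : Nspan w
 | N0 : Nspan 0
 | ND u1 u2 : Nspan u1 -> Nspan u2 -> Nspan (u1 + u2)
 | NZ z u : Nspan u -> Nspan (z *: u)
 | Nd m u : m < 0 -> Nspan u -> Nspan (dop b m u)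
 | Nh k u : k < 0 -> Nspan u -> Nspan (hop b k u).

Lemma Nc u : Nspan u -> cop b u = c *: u.
Proof.
case: Hw => _ _ Hc _ _.
elim=> [|||z u' _ IH|m u' _ _ IH|k u' _ _ IH].
- exact: Hc.
- by rewrite (lin0 copL) scaler0.
- by move=> u1 u2 _ IH1 _ IH2; rewrite (linD copL) IH1 IH2 scalerDr.
- by rewrite (linZ copL) IH !scalerA mulrC.
- by rewrite cdE IH (linZ (dopL m)).
- by rewrite chE IH (linZ (hopL k)).
Qed.

Lemma Nl u : Nspan u -> lop b u = l *: u.
Proof.
case: Hw => _ _ _ Hl _.
elim=> [|||z u' _ IH|m u' _ _ IH|k u' _ _ IH].
- exact: Hl.
- by rewrite (lin0 lopL) scaler0.
- by move=> u1 u2 _ IH1 _ IH2; rewrite (linD lopL) IH1 IH2 scalerDr.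
- by rewrite (linZ lopL) IH !scalerA mulrC.
- by rewrite ldE IH (linZ (dopL m)).
- by rewrite lhE IH (linZ (hopL k)).
Qed.

Lemma Nd0 u : Nspan u -> Nspan (dop b 0 u).
Proof.
case: Hw => _ Hd0 _ _ _.
elim=> [|||z u' _ IH|m u' mn Nu IH|k u' kn Nu IH].
- by rewrite Hd0; apply: NZ; apply: Nw.
- by rewrite (lin0 (dopL 0)); apply: N0.
- by move=> u1 u2 _ IH1 _ IH2; rewrite (linD (dopL 0)); apply: ND.
- by rewrite (linZ (dopL 0)); apply: NZ.
- rewrite ddE !add0r.
  have -> : (m == 0) = false by apply/negbTE; rewrite lt_eqF.
  rewrite addr0; apply: ND; first by apply: Nd.
  by apply: NZ; apply: Nd.
- rewrite dhE !add0r; apply: ND; first by apply: Nh.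
  by apply: NZ; apply: Nh.
Qed.

Lemma Npos u : Nspan u ->
  (forall n, 0 < n -> Nspan (dop b n u)) /\ (forall k, 0 <= k -> Nspan (hop b k u)).
Proof.
case: Hw => _ _ _ _ [Hdp Hhp].
elim=> [|||z u' _ [IH1 IH2]|m u' mn Nu [IH1 IH2]|k u' kn Nu [IH1 IH2]].
- by split=> n n0; [rewrite Hdp // | rewrite Hhp //]; apply: N0.
- by split=> n _; [rewrite (lin0 (dopL n))|rewrite (lin0 (hopL n))]; apply: N0.
- move=> u1 u2 _ [A1 A2] _ [B1 B2].
  by split=> n n0; [rewrite (linD (dopL n))|rewrite (linD (hopL n))]; apply: ND;
    [apply: A1|apply: B1|apply: A2|apply: B2].
- by split=> n n0; [rewrite (linZ (dopL n))|rewrite (linZ (hopL n))]; apply: NZ;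
    [apply: IH1|apply: IH2].
- have anyd : forall p, Nspan (dop b p u').
    move=> p; case: (ltgtP p 0) => [p0|p0|->]; [exact: Nd|exact: IH1|exact: Nd0].
  have anyh : forall p, Nspan (hop b p u').
    move=> p; case: (ltP p 0) => [p0|p0]; [exact: Nh|exact: IH2].
  split=> n n0.
  + rewrite ddE; apply: ND; first by apply: Nd => //; apply: IH1.
    apply: ND; first by apply: NZ.
    case: ifP => _; last exact: N0.
    by apply: NZ; rewrite (Nc Nu); apply: NZ.
  + rewrite hdE; apply: ND; first by apply: Nd => //; apply: IH2.
    by apply: NZ.
- have anyh : forall p, Nspan (hop b p u').
    move=> p; case: (ltP p 0) => [p0|p0]; [exact: Nh|exact: IH2].
  split=> n n0.
  + rewrite dhE; apply: ND; first by apply: Nh => //; apply: IH1.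
    by apply: NZ.
  + rewrite hhE; apply: ND; first by apply: Nh => //; apply: IH2.
    case: ifP => _; last exact: N0.
    by apply: NZ; rewrite (Nl Nu); apply: NZ.
Qed.

Lemma N_anyd m u : Nspan u -> Nspan (dop b m u).
Proof.
move=> Nu; case: (ltgtP m 0) => [p0|p0|->]; [exact: Nd|exact: (Npos Nu).1|exact: Nd0].
Qed.
Lemma N_anyh k u : Nspan u -> Nspan (hop b k u).
Proof. move=> Nu; case: (ltP k 0) => [p0|p0]; [exact: Nh|exact: (Npos Nu).2]. Qed.

Lemma Nspan_sub : is_Dsubmodule b Nspan.
Proof.
split; [exact: N0|exact: ND|exact: NZ|exact: N_anyd|split].
- exact: N_anyh.
- by move=> v Nv; rewrite (Nc Nv); apply: NZ.
- by move=> v Nv; rewrite (Nl Nv); apply: NZ.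
Qed.

Definition WD (u : W) := exists (lam : C) (s : seq (nat * W)),
  u = lam *: w + \sum_(p <- s) p.2 /\
  (forall p, p \in s -> (0 < p.1)%N /\ dop b 0 p.2 = (h + p.1%:R / 2%:R) *: p.2).

Lemma N_WD u : Nspan u -> WD u.
Proof.
case: Hw => _ Hd0 _ _ _.
elim=> [|||z u' _ [lam [s [E Hs]]]|m u' mn _ [lam [s [E Hs]]]|k u' kn _ [lam [s [E Hs]]]].
- by exists 1, [::]; rewrite big_nil scale1r addr0.
- by exists 0, [::]; rewrite big_nil scale0r addr0.
- move=> u1 u2 _ [l1 [s1 [E1 H1]]] _ [l2 [s2 [E2 H2]]].
  exists (l1 + l2), (s1 ++ s2); split.
    by rewrite E1 E2 big_cat /= scalerDl; rewrite -!addrA; congr (_ + _);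
      rewrite addrCA.
  by move=> p; rewrite mem_cat; case/orP => [/H1|/H2].
- exists (z * lam), [seq (p.1, z *: p.2) | p <- s]; split.
    by rewrite E scalerDr big_map scaler_sumr scalerA.
  move=> p /mapP[q /Hs [q0 Hq] ->] /=; split=> //.
  by rewrite (linZ (dopL 0)) Hq !scalerA mulrC.
- case: m mn => [M|M] //= _.
  exists 0, (((2 * M.+1)%N, lam *: dop b (Negz M) w) ::
     [seq ((p.1 + 2 * M.+1)%N, dop b (Negz M) p.2) | p <- s]); split.
    rewrite scale0r add0r big_cons big_map E (linD (dopL _)) (linZ (dopL _)).
    by rewrite (lin_sum (dopL _)).
  move=> p; rewrite inE; case/orP => [/eqP -> /=|/mapP[q /Hs [q0 Hq] ->] /=].
    split; first by rewrite muln_gt0.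
    rewrite (linZ (dopL 0)) (d_eig (mu := h)) ?Hd0 //.
    rewrite !scalerA; congr (_ *: _).
    by rewrite negz_C natrM; field.
  split; first by rewrite addn_gt0 q0.
  rewrite (d_eig (mu := h + q.1%:R / 2%:R)) //.
  rewrite negz_C; congr (_ *: _).
  by rewrite natrD natrM; field.
- case: k kn => [K|K] //= _.
  exists 0, (((2 * K + 1)%N, lam *: hop b (Negz K) w) ::
     [seq ((p.1 + 2 * K + 1)%N, hop b (Negz K) p.2) | p <- s]); split.
    rewrite scale0r add0r big_cons big_map E (linD (hopL _)) (linZ (hopL _)).
    by rewrite (lin_sum (hopL _)).
  move=> p; rewrite inE; case/orP => [/eqP -> /=|/mapP[q /Hs [q0 Hq] ->] /=].
    split; first by rewrite addn1.
    rewrite (linZ (dopL 0)) (@h_eig _ _ h) ?Hd0 //.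
    rewrite !scalerA; congr (_ *: _).
    by rewrite /Defs.half negz_C natrD natrM; field.
  split; first by rewrite addn1.
  rewrite (@h_eig _ _ (h + q.1%:R / 2%:R)) //.
  rewrite /Defs.half negz_C; congr (_ *: _).
  by rewrite !natrD ?natrM; field.
Qed.

End Gen.

Section Eig.
Variables (W : lmodType C) (b : Dact W) (Hb : is_Dmodule b).

Lemma eig_indep (s : seq (C * W)) u mu : dop b 0 u = mu *: u ->
  (forall p, p \in s -> dop b 0 p.2 = p.1 *: p.2 /\ p.1 != mu) ->
  u = \sum_(p <- s) p.2 -> u = 0.
Proof.
move: {2}(size s) (erefl (size s)) => n; elim: n s u => [|n IH] [|p s] u sn Hu Hs E //=;
  try by rewrite E big_nil.
case: sn => sn.
have [Hp1 Hp2] := Hs p (mem_head _ _).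
have Hs' : forall q, q \in s -> dop b 0 q.2 = q.1 *: q.2 /\ q.1 != mu.
  by move=> q qs; apply: Hs; rewrite inE qs orbT.
rewrite big_cons in E.
have E2 : (mu - p.1) *: u = \sum_(q <- s) (q.1 - p.1) *: q.2.
  have : dop b 0 u - p.1 *: u = (mu - p.1) *: u by rewrite Hu scalerBl.
  move=> <-; rewrite E (linD (dopL Hb 0)) Hp1 (lin_sum (dopL Hb 0)) scalerDr.
  rewrite (eq_big_seq (fun q => q.1 *: q.2)); last by move=> q /Hs' [].
  rewrite opprD addrACA subrr add0r scaler_sumr -sumrB.
  by apply: eq_bigr => q _; rewrite scalerBl.
have : (mu - p.1) *: u = 0.
  apply: (IH [seq (q.1, (q.1 - p.1) *: q.2) | q <- s] ((mu - p.1) *: u)).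
  - by rewrite size_map.
  - by rewrite (linZ (dopL Hb 0)) Hu !scalerA mulrC.
  - move=> q /mapP[q' /Hs' [q1 q2] ->] /=; split=> //.
    by rewrite (linZ (dopL Hb 0)) q1 !scalerA mulrC.
  - by rewrite E2 big_map.
move/eqP; rewrite scaler_eq0 subr_eq0 eq_sym (negbTE Hp2) /= => /eqP //.
Qed.
End Eig.

Section Irr.
Variables (W : lmodType C) (b : Dact W) (Hb : is_Dmodule b) (Hirr : irreducible_Dmod b).
Variables (c h l : C) (w : W) (Hw : hw_vector b c h l w).

Lemma N_all u : Nspan b w u.
Proof.
case: Hirr => _ /(_ _ (Nspan_sub Hb Hw)) [H|//].
by case: Hw => /negP wn0 _ _ _ _; exfalso; apply: wn0; apply/eqP; apply: H; apply: Nw.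
Qed.

Lemma c_scal u : cop b u = c *: u.
Proof. exact: (Nc Hb Hw (N_all u)). Qed.
Lemma l_scal u : lop b u = l *: u.
Proof. exact: (Nl Hb Hw (N_all u)). Qed.

Lemma weight u mu : u != 0 -> dop b 0 u = mu *: u -> exists j : nat, mu = h + j%:R / 2%:R.
Proof.
move=> un0 Hu; case: (pselect (exists j : nat, mu = h + j%:R / 2%:R)) => // Hn.
exfalso; move/negP: un0; apply; apply/eqP.
have [lam [s [E Hs]]] := N_WD Hb Hw (N_all u).
apply: (eig_indep Hb (s := (h, lam *: w) :: [seq (h + p.1%:R / 2%:R, p.2) | p <- s]) Hu).
- move=> p; rewrite inE; case/orP => [/eqP -> /=|/mapP[q /Hs [q0 Hq] ->] /=].
    split.
      by case: Hw => _ Hd0 _ _ _; rewrite (linZ (dopL Hb 0)) Hd0 !scalerA mulrC.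
    apply/eqP => hmu; apply: Hn; exists 0%N; by rewrite -hmu mul0r addr0.
  split=> //; apply/eqP => hmu; apply: Hn; by exists q.1.
- by rewrite big_cons big_map.
Qed.

Lemma LF u : exists N : int, 0 <= N /\ forall n, N <= n -> dop b n u = 0 /\ hop b n u = 0.
Proof.
elim: (N_all u) => [|||z u' _ [N [N0 HN]]|m u' mn _ [N [N0 HN]]|k u' kn _ [N [N0 HN]]].
- case: Hw => _ _ _ _ [Hdp Hhp].
  exists 1; split=> // n n1; split; [apply: Hdp|apply: Hhp]; lia.
- by exists 0; split=> // n _; rewrite (lin0 (dopL Hb n)) (lin0 (hopL Hb n)).
- move=> u1 u2 _ [N1 [N10 H1]] _ [N2 [N20 H2]].
  exists (N1 + N2); split; first lia.
  move=> n Hn; have [A1 A2] := H1 n ltac:(lia); have [B1 B2] := H2 n ltac:(lia).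
  by rewrite (linD (dopL Hb n)) (linD (hopL Hb n)) A1 A2 B1 B2 addr0.
- exists N; split=> // n Hn; have [A1 A2] := HN n Hn.
  by rewrite (linZ (dopL Hb n)) (linZ (hopL Hb n)) A1 A2 !scaler0.
- exists (N - m + 1); split; first lia.
  move=> n Hn; have [A1 A2] := HN n ltac:(lia); have [B1 B2] := HN (n + m) ltac:(lia).
  have [C1 C2] := HN (m + n) ltac:(lia).
  split.
    rewrite (ddE Hb) A1 (lin0 (dopL Hb m)) B1 scaler0 add0r add0r.
    by have -> : (n + m == 0) = false by apply/negbTE; lia.
  by rewrite (hdE Hb) A2 (lin0 (dopL Hb m)) C2 scaler0 addr0.
- exists (N - k + 1); split; first lia.
  move=> n Hn; have [A1 A2] := HN n ltac:(lia); have [B1 B2] := HN (n + k) ltac:(lia).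
  split.
    by rewrite (dhE Hb) A1 (lin0 (hopL Hb k)) B2 scaler0 addr0.
  rewrite (hhE Hb) A2 (lin0 (hopL Hb k)) add0r.
  by have -> : (n + k + 1 == 0) = false by apply/negbTE; lia.
Qed.
End Irr.

Section Prod.
Variables (V V1 : lmodType C) (a : Dact V) (a1 : Dact V1).

Definition pD : Dact (V * V1)%type :=
  DAct (fun m x => (dop a m x.1, dop a1 m x.2)) (fun k x => (hop a k x.1, hop a1 k x.2))
       (fun x => (cop a x.1, cop a1 x.2)) (fun x => (lop a x.1, lop a1 x.2)).

Lemma pe (x y : (V * V1)%type) : x.1 = y.1 -> x.2 = y.2 -> x = y.
Proof. by case: x y => ? ? [? ?] /= -> ->. Qed.

Lemma pD_mod : is_Dmodule a -> is_Dmodule a1 -> is_Dmodule pD.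
Proof.
move=> Ha Ha1.
have [L1 L2 L3 L4 [DD DH HH [CD CH] [LD LH CL]]] := Ha.
have [M1 M2 M3 M4 [EE EH GG [ED EC] [FD FH FL]]] := Ha1.
split.
- by move=> m k x y; apply: pe; [exact: L1|exact: M1].
- by move=> m k x y; apply: pe; [exact: L2|exact: M2].
- by move=> k x y; apply: pe; [exact: L3|exact: M3].
- by move=> k x y; apply: pe; [exact: L4|exact: M4].
split.
- move=> m n v; have E1 := DD m n v.1; have E2 := EE m n v.2.
  by apply: pe; [move: E1|move: E2]; case: (m + n == 0) => E; exact: E.
- move=> m k v; have E1 := DH m k v.1; have E2 := EH m k v.2.
  by apply: pe; [exact: E1|exact: E2].
- move=> k j v; have E1 := HH k j v.1; have E2 := GG k j v.2.
  by apply: pe; [move: E1|move: E2]; case: (k + j + 1 == 0) => E; exact: E.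
- split=> [m|k] v; apply: pe; [exact: CD|exact: ED|exact: CH|exact: EC].
split.
- by move=> m v; apply: pe; [exact: LD|exact: FD].
- by move=> m v; apply: pe; [exact: LH|exact: FH].
- by move=> v; apply: pe; [exact: CL|exact: FL].
Qed.
End Prod.

Definition DisoF (V W : lmodType C) (a : Dact V) (b : Dact W) (f : V -> W) : Prop :=
  [/\ linear f, bijective f,
   (forall m v, f (dop a m v) = dop b m (f v)),
   (forall k v, f (hop a k v) = hop b k (f v)) &
   (forall v, f (cop a v) = cop b (f v)) /\ (forall v, f (lop a v) = lop b (f v))].

Section Uniq.
Variables (V V1 : lmodType C) (a : Dact V) (a1 : Dact V1).
Variables (Ha : is_Dmodule a) (Ha1 : is_Dmodule a1).
Variables (Ia : irreducible_Dmod a) (Ia1 : irreducible_Dmod a1).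
Variables (c h l : C) (v : V) (v1 : V1).
Variables (Hv : hw_vector a c h l v) (Hv1 : hw_vector a1 c h l v1).

Let P := pD a a1.
Let HP : is_Dmodule P := pD_mod Ha Ha1.
Let HwP : hw_vector P c h l (v, v1).
Proof.
case: Hv => vn0 A1 A2 A3 [A4 A5]; case: Hv1 => _ B1 B2 B3 [B4 B5].
split.
- apply/negP => /eqP E; move/negP: vn0; apply; apply/eqP; exact: (congr1 fst E).
- by apply: pe; [exact: A1|exact: B1].
- by apply: pe; [exact: A2|exact: B2].
- by apply: pe; [exact: A3|exact: B3].
split=> n n0; apply: pe; [exact: A4|exact: B4|exact: A5|exact: B5].
Qed.

Let NS := Nspan P (v, v1).

Lemma NS_sub : is_Dsubmodule P NS.
Proof. have := Nspan_sub HP HwP. exact. Qed.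

Lemma NS_w_only (x : (V * V1)%type) : NS x -> dop P 0 x = h *: x ->
  exists lam, x = lam *: (v, v1).
Proof.
move=> Nx Hx; have [lam [s [E Hs]]] := N_WD HP HwP Nx.
exists lam.
have : x - lam *: (v, v1) = 0.
  apply: (eig_indep HP (s := [seq (h + p.1%:R / 2%:R, p.2) | p <- s]) (mu := h)).
  - rewrite (linB (dopL HP 0)) (linZ (dopL HP 0)) Hx.
    by case: HwP => _ -> _ _ _; rewrite scalerBr !scalerA mulrC.
  - move=> p /mapP[q /Hs [q0 Hq] ->] /=; split=> //.
    rewrite -subr_eq0 addrAC subrr add0r mulf_eq0 invr_eq0 !pnatr_eq0.
    by rewrite negb_or -lt0n q0.
  - by rewrite E big_map addrAC subrr add0r.
by move/eqP; rewrite subr_eq0 => /eqP.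
Qed.

Lemma K1 u1 : NS (0, u1) -> u1 = 0.
Proof.
move=> N0u.
have Sub : is_Dsubmodule a1 (fun u => NS (0, u)).
  have [S0 SD SZ Sd [Sh Sc Sl]] := NS_sub.
  split.
  - exact: S0.
  - move=> x y Nx Ny; suff -> : ((0 : V), x + y) = (0, x) + (0, y) by apply: SD.
    by apply: pe; [exact: (esym (addr0 0))|].
  - move=> z x Nx; suff -> : ((0 : V), z *: x) = z *: (0, x) by apply: SZ.
    by apply: pe; [exact: (esym (scaler0 _ z))|].
  - move=> m x Nx; suff -> : ((0 : V), dop a1 m x) = dop P m (0, x) by apply: Sd.
    by apply: pe; [exact: (esym (lin0 (dopL Ha m)))|].
  split.
  - move=> k x Nx; suff -> : ((0 : V), hop a1 k x) = hop P k (0, x) by apply: Sh.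
    by apply: pe; [exact: (esym (lin0 (hopL Ha k)))|].
  - move=> x Nx; suff -> : ((0 : V), cop a1 x) = cop P (0, x) by apply: Sc.
    by apply: pe; [exact: (esym (lin0 (copL Ha)))|].
  - move=> x Nx; suff -> : ((0 : V), lop a1 x) = lop P (0, x) by apply: Sl.
    by apply: pe; [exact: (esym (lin0 (lopL Ha)))|].
case: Ia1 => _ /(_ _ Sub) [/(_ _ N0u) //|All].
exfalso; have := All v1 => Nv1.
have [lam E] : exists lam, ((0 : V), v1) = lam *: (v, v1).
  apply: NS_w_only => //; apply: pe => /=.
    by rewrite (lin0 (dopL Ha 0)) scaler0.
  by case: Hv1 => _ -> _ _ _.
case: E => E1 E2.
case: Hv => vn0 _ _ _ _; case: Hv1 => v1n0 _ _ _ _.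
have lam0 : lam = 0.
  by move/eqP: E1; rewrite eq_sym scaler_eq0 (negbTE vn0) orbF => /eqP.
by move/negP: v1n0; apply; rewrite E2 lam0 scale0r.
Qed.

Lemma K0 u : NS (u, 0) -> u = 0.
Proof.
move=> N0u.
have Sub : is_Dsubmodule a (fun x => NS (x, 0)).
  have [S0 SD SZ Sd [Sh Sc Sl]] := NS_sub.
  split.
  - exact: S0.
  - move=> x y Nx Ny; suff -> : (x + y, (0 : V1)) = (x, 0) + (y, 0) by apply: SD.
    by apply: pe; [|exact: (esym (addr0 0))].
  - move=> z x Nx; suff -> : (z *: x, (0 : V1)) = z *: (x, 0) by apply: SZ.
    by apply: pe; [|exact: (esym (scaler0 _ z))].
  - move=> m x Nx; suff -> : (dop a m x, (0 : V1)) = dop P m (x, 0) by apply: Sd.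
    by apply: pe; [|exact: (esym (lin0 (dopL Ha1 m)))].
  split.
  - move=> k x Nx; suff -> : (hop a k x, (0 : V1)) = hop P k (x, 0) by apply: Sh.
    by apply: pe; [|exact: (esym (lin0 (hopL Ha1 k)))].
  - move=> x Nx; suff -> : (cop a x, (0 : V1)) = cop P (x, 0) by apply: Sc.
    by apply: pe; [|exact: (esym (lin0 (copL Ha1)))].
  - move=> x Nx; suff -> : (lop a x, (0 : V1)) = lop P (x, 0) by apply: Sl.
    by apply: pe; [|exact: (esym (lin0 (lopL Ha1)))].
case: Ia => _ /(_ _ Sub) [/(_ _ N0u) //|All].
exfalso; have := All v => Nv.
have [lam E] : exists lam, (v, (0 : V1)) = lam *: (v, v1).
  apply: NS_w_only => //; apply: pe => /=.
    by case: Hv => _ -> _ _ _.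
  by rewrite (lin0 (dopL Ha1 0)) scaler0.
case: E => E1 E2.
case: Hv => vn0 _ _ _ _; case: Hv1 => v1n0 _ _ _ _.
have lam0 : lam = 0.
  by move/eqP: E2; rewrite eq_sym scaler_eq0 (negbTE v1n0) orbF => /eqP.
by move/negP: vn0; apply; rewrite E1 lam0 scale0r.
Qed.

Lemma NSB x y : NS x -> NS y -> NS (x - y).
Proof.
have [_ SD SZ _ _] := NS_sub => Nx Ny; apply: SD => //.
by rewrite -scaleN1r; apply: SZ.
Qed.

Lemma S0all u : exists u1, NS (u, u1).
Proof.
have Sub : is_Dsubmodule a (fun x => exists u1, NS (x, u1)).
  have [S0 SD SZ Sd [Sh Sc Sl]] := NS_sub.
  split.
  - by exists 0.
  - by move=> x y [x1 Nx] [y1 Ny]; exists (x1 + y1); exact: SD _ _ Nx Ny.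
  - by move=> z x [x1 Nx]; exists (z *: x1); exact: SZ z _ Nx.
  - by move=> m x [x1 Nx]; exists (dop a1 m x1); exact: Sd m _ Nx.
  split.
  - by move=> k x [x1 Nx]; exists (hop a1 k x1); exact: Sh k _ Nx.
  - by move=> x [x1 Nx]; exists (cop a1 x1); exact: Sc _ Nx.
  - by move=> x [x1 Nx]; exists (lop a1 x1); exact: Sl _ Nx.
case: Ia => _ /(_ _ Sub) [H|//].
case: Hv => /negP vn0 _ _ _ _; exfalso; apply: vn0; apply/eqP; apply: H.
by exists v1; apply: Nw.
Qed.

Lemma S1all u1 : exists u, NS (u, u1).
Proof.
have Sub : is_Dsubmodule a1 (fun x => exists u, NS (u, x)).
  have [S0 SD SZ Sd [Sh Sc Sl]] := NS_sub.
  split.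
  - by exists 0.
  - by move=> x y [x1 Nx] [y1 Ny]; exists (x1 + y1); exact: SD _ _ Nx Ny.
  - by move=> z x [x1 Nx]; exists (z *: x1); exact: SZ z _ Nx.
  - by move=> m x [x1 Nx]; exists (dop a m x1); exact: Sd m _ Nx.
  split.
  - by move=> k x [x1 Nx]; exists (hop a k x1); exact: Sh k _ Nx.
  - by move=> x [x1 Nx]; exists (cop a x1); exact: Sc _ Nx.
  - by move=> x [x1 Nx]; exists (lop a x1); exact: Sl _ Nx.
case: Ia1 => _ /(_ _ Sub) [H|//].
case: Hv1 => /negP vn0 _ _ _ _; exfalso; apply: vn0; apply/eqP; apply: H.
by exists v; apply: Nw.
Qed.


Lemma uniq1 u x y : NS (u, x) -> NS (u, y) -> x = y.
Proof.
move=> Nx Ny; have N := NSB Nx Ny.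
have : NS (0, x - y).
  suff -> : ((0 : V), x - y) = (u, x) - (u, y) by [].
  by apply: pe; [exact: (esym (subrr u))|].
by move/K1/eqP; rewrite subr_eq0 => /eqP.
Qed.

Lemma uniq0 u x y : NS (x, u) -> NS (y, u) -> x = y.
Proof.
move=> Nx Ny; have N := NSB Nx Ny.
have : NS (x - y, 0).
  suff -> : (x - y, (0 : V1)) = (x, u) - (y, u) by [].
  by apply: pe; [|exact: (esym (subrr u))].
by move/K0/eqP; rewrite subr_eq0 => /eqP.
Qed.

Lemma hw_unique : exists psi : V -> V1, DisoF a a1 psi.
Proof.
pose psi u := proj1_sig (cid (S0all u)).
pose phi u1 := proj1_sig (cid (S1all u1)).
have Hpsi u : NS (u, psi u) by rewrite /psi; case: cid.
have Hphi u1 : NS (phi u1, u1) by rewrite /phi; case: cid.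
have [S0 SD SZ Sd [Sh Sc Sl]] := NS_sub.
exists psi; split.
- move=> k x y; apply: (uniq1 (Hpsi _)).
  exact: (SD _ _ (SZ k _ (Hpsi x)) (Hpsi y)).
- exists phi.
  + by move=> u; apply: (uniq0 (Hphi _) (Hpsi u)).
  + by move=> u1; apply: (uniq1 (Hpsi _) (Hphi u1)).
- by move=> m u; apply: (uniq1 (Hpsi _)); exact: (Sd m _ (Hpsi u)).
- by move=> k u; apply: (uniq1 (Hpsi _)); exact: (Sh k _ (Hpsi u)).
split.
- by move=> u; apply: (uniq1 (Hpsi _)); exact: (Sc _ (Hpsi u)).
- by move=> u; apply: (uniq1 (Hpsi _)); exact: (Sl _ (Hpsi u)).
Qed.
End Uniq.

Section FSU.
Variables (V : lmodType C) (I : int -> Prop).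

Lemma fsuppP (f : int -> V) : fsupp_pred I f <->
  (exists s : seq int, forall j, j \notin s -> f j = 0) /\ (forall j, ~ I j -> f j = 0).
Proof.
rewrite /fsupp_pred; split.
  by move=> /andP[/asboolP A /asboolP B].
by case=> A B; apply/andP; split; apply/asboolP.
Qed.

Lemma fsP (f : FS V I) :
  (exists s : seq int, forall j, j \notin s -> val f j = 0) /\ (forall j, ~ I j -> val f j = 0).
Proof. exact: (fsuppP _).1 (valP f). Qed.

Lemma fs_ext (f g : FS V I) : (forall j, val f j = val g j) -> f = g.
Proof. by move=> H; apply: val_inj; apply: funext. Qed.

Lemma fs_liftE F (f : FS V I) : fsupp_pred I (F (val f)) -> val (fs_lift F f) = F (val f).
Proof. by move=> H; rewrite /fs_lift insubdK. Qed.

Lemma fsupp_gen (f g : int -> V) sh : fsupp_pred I f ->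
  (forall j, f j = 0 -> f (j - sh) = 0 -> g j = 0) -> (forall j, ~ I j -> g j = 0) ->
  fsupp_pred I g.
Proof.
move=> /fsuppP [[s Hs] _] Hg HI; apply/fsuppP; split=> //.
exists (s ++ [seq x + sh | x <- s]) => j; rewrite mem_cat negb_or => /andP[js jm].
apply: Hg; first exact: Hs.
apply: Hs; apply: contra jm => H; apply/mapP; exists (j - sh) => //; by rewrite subrK.
Qed.

Definition dl (j0 : int) (u : V) : FS V I := insubd 0 (fun j => if j == j0 then u else 0).
Lemma dlE j0 u : I j0 -> val (dl j0 u) = fun j => if j == j0 then u else 0.
Proof.
move=> Ij0; rewrite /dl insubdK //; apply/fsuppP; split.
  by exists [:: j0] => j; rewrite inE => /negbTE ->.
move=> j nI; case: eqP => // E; by rewrite E in nI.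
Qed.
End FSU.

Section TA.
Variables (V : lmodType C) (a : Dact V) (Ha : is_Dmodule a) (al be ga : C).

Lemma tAd m (f : FS V allI) : val (dop (tensA a al be ga) m f) = fun j =>
  dop a m (val f j) + (al + be * m%:~R - (j - 2 * m)%:~R / 2%:R) *: val f (j - 2 * m).
Proof.
apply: fs_liftE; apply: (fsupp_gen (sh := 2 * m) (valP f)).
  by move=> j -> ->; rewrite (lin0 (dopL Ha m)) scaler0 addr0.
by move=> j H; exfalso; apply: H.
Qed.

Lemma tAh k (f : FS V allI) : val (hop (tensA a al be ga) k f) = fun j =>
  hop a k (val f j) + (if oddz (j - (2 * k + 1)) then ga else 1) *: val f (j - (2 * k + 1)).
Proof.
apply: fs_liftE; apply: (fsupp_gen (sh := 2 * k + 1) (valP f)).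
  by move=> j -> ->; rewrite (lin0 (hopL Ha k)) scaler0 addr0.
by move=> j H; exfalso; apply: H.
Qed.

Lemma tAc (f : FS V allI) : val (cop (tensA a al be ga) f) = fun j => cop a (val f j).
Proof.
apply: fs_liftE; apply: (fsupp_gen (sh := 0) (valP f)).
  by move=> j -> _; rewrite (lin0 (copL Ha)).
by move=> j H; exfalso; apply: H.
Qed.

Lemma tAl (f : FS V allI) : val (lop (tensA a al be ga) f) = fun j => lop a (val f j).
Proof.
apply: fs_liftE; apply: (fsupp_gen (sh := 0) (valP f)).
  by move=> j -> _; rewrite (lin0 (lopL Ha)).
by move=> j H; exfalso; apply: H.
Qed.

Lemma tA'd m (f : FS V (idxA' al be)) : val (dop (tensA' a al be) m f) = fun j =>
  dop a m (val f j) + (if `[< idxA' al be j >] then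
     (al + be * m%:~R - (j - m)%:~R) *: val f (j - m) else 0).
Proof.
apply: fs_liftE; apply: (fsupp_gen (sh := m) (valP f)).
  by move=> j -> ->; rewrite (lin0 (dopL Ha m)) scaler0 add0r; case: ifP.
move=> j H; rewrite ((fsP f).2 j H) (lin0 (dopL Ha m)) add0r asboolF //.
Qed.

Lemma tA'h k (f : FS V (idxA' al be)) : val (hop (tensA' a al be) k f) = fun j =>
  hop a k (val f j).
Proof.
apply: fs_liftE; apply: (fsupp_gen (sh := 0) (valP f)).
  by move=> j -> _; rewrite (lin0 (hopL Ha k)).
by move=> j H; rewrite ((fsP f).2 j H) (lin0 (hopL Ha k)).
Qed.

Lemma tA'c (f : FS V (idxA' al be)) : val (cop (tensA' a al be) f) = fun j => cop a (val f j).
Proof.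
apply: fs_liftE; apply: (fsupp_gen (sh := 0) (valP f)).
  by move=> j -> _; rewrite (lin0 (copL Ha)).
by move=> j H; rewrite ((fsP f).2 j H) (lin0 (copL Ha)).
Qed.

Lemma tA'l (f : FS V (idxA' al be)) : val (lop (tensA' a al be) f) = fun j => lop a (val f j).
Proof.
apply: fs_liftE; apply: (fsupp_gen (sh := 0) (valP f)).
  by move=> j -> _; rewrite (lin0 (lopL Ha)).
by move=> j H; rewrite ((fsP f).2 j H) (lin0 (lopL Ha)).
Qed.
End TA.

Definition mkLin (U W : lmodType C) (g : U -> W) (H : linear g) : {linear U -> W} :=
  HB.pack g (GRing.isLinear.Build C U W *:%R g H).

Section DisoS.
Variables (V W : lmodType C) (a : Dact V) (b : Dact W).

Lemma DisoF_Diso f : DisoF a b f -> Diso a b.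
Proof. by case=> L B D H [Cc Ll]; exists (@mkLin V W f L). Qed.

Lemma Diso_DisoF : Diso a b -> exists f, DisoF a b f.
Proof.
case=> phi [B [D H Cc Ll]]; exists phi; split=> //.
by move=> k x y; rewrite linearD linearZ.
Qed.

Lemma DisoF_sym f : DisoF a b f -> exists g, DisoF b a g.
Proof.
case=> L [g fK gK] D H [Cc Ll].
have fi := can_inj fK.
exists g; split.
- move=> k x y; apply: fi; by rewrite L !gK.
- by exists f.
- by move=> m x; apply: fi; rewrite D !gK.
- by move=> m x; apply: fi; rewrite H !gK.
split.
- by move=> x; apply: fi; rewrite Cc !gK.
- by move=> x; apply: fi; rewrite Ll !gK.
Qed.
End DisoS.

Lemma Diso_sym (V W : lmodType C) (a : Dact V) (b : Dact W) : Diso a b -> Diso b a.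
Proof.
move/Diso_DisoF => [f /DisoF_sym [g Hg]]; exact: DisoF_Diso Hg.
Qed.

Lemma DisoF_inv (V W : lmodType C) (a : Dact V) (b : Dact W) f g :
  DisoF a b f -> cancel f g -> cancel g f -> DisoF b a g.
Proof.
case=> L _ D H [Cc Ll] fK gK.
have fi := can_inj fK.
split.
- move=> k x y; apply: fi; by rewrite L !gK.
- by exists f.
- by move=> m x; apply: fi; rewrite D !gK.
- by move=> m x; apply: fi; rewrite H !gK.
split.
- by move=> x; apply: fi; rewrite Cc !gK.
- by move=> x; apply: fi; rewrite Ll !gK.
Qed.

Section IsoGen.
Variables (V V1 : lmodType C) (a : Dact V) (a1 : Dact V1).
Variables (Ha : is_Dmodule a) (Ha1 : is_Dmodule a1).
Variables (psi : V -> V1) (Hpsi : DisoF a a1 psi).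
Variables (I I1 : int -> Prop) (n : int) (mu : int -> C).
Hypothesis HI : forall j, I (j + n) <-> I1 j.
Hypothesis Hmu : forall j, I1 j -> mu j != 0.

Let L := let: And5 L _ _ _ _ := Hpsi in L.
Lemma psi0 : psi 0 = 0. Proof. exact: lin0 L. Qed.

Definition PhiF (f : FS V I) : FS V1 I1 :=
  insubd 0 (fun j => mu j *: psi (val f (j + n))).

Lemma PhiE f : val (PhiF f) = fun j => mu j *: psi (val f (j + n)).
Proof.
rewrite /PhiF insubdK //; apply/fsuppP; split.
  have [[s Hs] _] := fsP f.
  exists [seq x - n | x <- s] => j jn; rewrite Hs ?psi0 ?scaler0 //.
  apply: contra jn => js; apply/mapP; exists (j + n) => //; by rewrite addrK.
move=> j nI1; have nI : ~ I (j + n) by move/(HI j).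
by rewrite ((fsP f).2 _ nI) psi0 scaler0.
Qed.

Lemma PhiF_lin : linear PhiF.
Proof.
move=> k f g; apply: fs_ext => j.
rewrite PhiE /=.
change (mu j *: psi (k *: val f (j + n) + val g (j + n)) =
  k *: val (PhiF f) j + val (PhiF g) j).
by rewrite !PhiE L scalerDr !scalerA mulrC.
Qed.

Lemma PhiF_bij : bijective PhiF.
Proof.
have [_ [g psiK gK] _ _ _] := Hpsi.
have Hg := DisoF_inv Hpsi psiK gK.
have g0 : g 0 = 0 by case: Hg => Lg _ _ _ _; exact: lin0 Lg.
have Lg : linear g by case: Hg.
pose G (f1 : FS V1 I1) : FS V I :=
  insubd 0 (fun j => (mu (j - n))^-1 *: g (val f1 (j - n))).
have GE f1 : val (G f1) = fun j => (mu (j - n))^-1 *: g (val f1 (j - n)).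
  rewrite /G insubdK //; apply/fsuppP; split.
    have [[s Hs] _] := fsP f1.
    exists [seq x + n | x <- s] => j jn; rewrite Hs ?g0 ?scaler0 //.
    apply: contra jn => js; apply/mapP; exists (j - n) => //; by rewrite subrK.
  move=> j nI; have nI1 : ~ I1 (j - n).
    by move=> H1; apply: nI; move: ((HI _).2 H1); rewrite subrK.
  by rewrite ((fsP f1).2 _ nI1) g0 scaler0.
exists G.
- move=> f; apply: fs_ext => j; rewrite GE PhiE /= subrK.
  case: (pselect (I j)) => Ij.
    have I1j : I1 (j - n) by apply/HI; rewrite subrK.
    by rewrite (linZ Lg) psiK scalerA mulVf ?scale1r //; apply: Hmu.
  by rewrite ((fsP f).2 _ Ij) psi0 scaler0 g0 scaler0.
- move=> f1; apply: fs_ext => j; rewrite PhiE GE /= addrK.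
  case: (pselect (I1 j)) => Ij.
    by rewrite (linZ L) gK scalerA divff ?scale1r //; apply: Hmu.
  by rewrite ((fsP f1).2 _ Ij) g0 scaler0 psi0 scaler0.
Qed.
End IsoGen.

Section IsoA'.
Variables (V V1 : lmodType C) (a : Dact V) (a1 : Dact V1).
Variables (Ha : is_Dmodule a) (Ha1 : is_Dmodule a1).
Variables (psi : V -> V1) (Hpsi : DisoF a a1 psi).
Variables (al be al1 be1 : C) (n : int) (mu : int -> C).
Hypothesis HI : forall j, idxA' al be (j + n) <-> idxA' al1 be1 j.
Hypothesis Hmu : forall j, idxA' al1 be1 j -> mu j != 0.
Hypothesis Hco : forall m j, idxA' al1 be1 j -> idxA' al1 be1 (j - m) ->
  mu j * (al + be * m%:~R - (j + n - m)%:~R) = mu (j - m) * (al1 + be1 * m%:~R - (j - m)%:~R).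

Lemma isoA'_gen : Diso (tensA' a al be) (tensA' a1 al1 be1).
Proof.
have [L _ D H [Cc Ll]] := Hpsi.
have p0 := psi0 Hpsi.
have PE := PhiE Hpsi mu HI.
apply: (@DisoF_Diso _ _ _ _ (PhiF psi (idxA' al1 be1) n mu)); split.
- exact: (PhiF_lin Hpsi mu HI).
- exact: (PhiF_bij Hpsi HI Hmu).
- move=> m f; apply: fs_ext => j.
  rewrite PE (tA'd Ha) (tA'd Ha1) PE /=.
  case: (pselect (idxA' al1 be1 j)) => Ij.
    have Ijn : idxA' al be (j + n) by apply/HI.
    rewrite !asboolT // !(linD L) D (linZ (dopL Ha1 m)) (linZ L) scalerDr !scalerA.
    congr (_ + _); rewrite [j - m + n]addrAC.
    case: (pselect (idxA' al1 be1 (j - m))) => Ijm.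
      by rewrite Hco // mulrC.
    have Ijm' : ~ idxA' al be (j + n - m) by rewrite addrAC; move/HI.
    by rewrite ((fsP f).2 _ Ijm') p0 !scaler0.
  have Ijn : ~ idxA' al be (j + n) by move/HI.
  rewrite !asboolF // ((fsP f).2 _ Ijn) (lin0 (dopL Ha m)) !addr0 p0 scaler0.
  by rewrite (lin0 (dopL Ha1 m)).
- move=> k f; apply: fs_ext => j.
  by rewrite PE (tA'h Ha) (tA'h Ha1) PE /= H (linZ (hopL Ha1 k)).
split.
- move=> f; apply: fs_ext => j.
  by rewrite PE (tA'c Ha) (tA'c Ha1) PE /= Cc (linZ (copL Ha1)).
- move=> f; apply: fs_ext => j.
  by rewrite PE (tA'l Ha) (tA'l Ha1) PE /= Ll (linZ (lopL Ha1)).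
Qed.
End IsoA'.

Section IsoA.
Variables (V V1 : lmodType C) (a : Dact V) (a1 : Dact V1).
Variables (Ha : is_Dmodule a) (Ha1 : is_Dmodule a1).
Variables (psi : V -> V1) (Hpsi : DisoF a a1 psi).
Variables (al be ga al1 be1 ga1 : C) (n : int) (mu : int -> C).
Hypothesis Hmu : forall j, mu j != 0.
Hypothesis Hcd : forall m j,
  mu j * (al + be * m%:~R - (j + n - 2 * m)%:~R / 2%:R) =
  mu (j - 2 * m) * (al1 + be1 * m%:~R - (j - 2 * m)%:~R / 2%:R).
Hypothesis Hch : forall k j,
  mu j * (if oddz (j + n - (2 * k + 1)) then ga else 1) =
  mu (j - (2 * k + 1)) * (if oddz (j - (2 * k + 1)) then ga1 else 1).

Lemma isoA_gen : Diso (tensA a al be ga) (tensA a1 al1 be1 ga1).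
Proof.
have [L _ D H [Cc Ll]] := Hpsi.
have p0 := psi0 Hpsi.
have HI : forall j, allI (j + n) <-> allI j by [].
have Hmu' : forall j, allI j -> mu j != 0 by move=> j _; apply: Hmu.
have PE := PhiE Hpsi mu HI.
apply: (@DisoF_Diso _ _ _ _ (PhiF psi (I := allI) allI n mu)); split.
- exact: (PhiF_lin Hpsi mu HI).
- exact: (PhiF_bij Hpsi HI Hmu').
- move=> m f; apply: fs_ext => j.
  rewrite PE (tAd Ha) (tAd Ha1) PE /=.
  rewrite !(linD L) D (linZ (dopL Ha1 m)) (linZ L) scalerDr !scalerA.
  by congr (_ + _); rewrite [j - 2 * m + n]addrAC Hcd mulrC.
- move=> k f; apply: fs_ext => j.
  rewrite PE (tAh Ha) (tAh Ha1) PE /=.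
  rewrite !(linD L) H (linZ (hopL Ha1 k)) (linZ L) scalerDr !scalerA.
  by congr (_ + _); rewrite [j - (2 * k + 1) + n]addrAC Hch mulrC.
split.
- move=> f; apply: fs_ext => j.
  by rewrite PE (tAc Ha) (tAc Ha1) PE /= Cc (linZ (copL Ha1)).
- move=> f; apply: fs_ext => j.
  by rewrite PE (tAl Ha) (tAl Ha1) PE /= Ll (linZ (lopL Ha1)).
Qed.
End IsoA.

Lemma oddz_2m (j m : int) : oddz (j - 2 * m) = oddz j.
Proof.
rewrite /oddz; case: (boolP (odd (absz j))); case: (boolP (odd (absz (j - 2 * m)%R))) => /=; lia.
Qed.
Lemma oddz_odd (j n k : int) : oddz (j + n - (2 * k + 1)) = ~~ (oddz j (+) oddz n).
Proof.
rewrite /oddz; case: (boolP (odd (absz j))); case: (boolP (odd (absz n)));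
  case: (boolP (odd (absz (j + n - (2 * k + 1))%R))) => /=; lia.
Qed.
Lemma oddz_odd1 (j k : int) : oddz (j - (2 * k + 1)) = ~~ oddz j.
Proof.
rewrite /oddz; case: (boolP (odd (absz j)));
  case: (boolP (odd (absz (j - (2 * k + 1))%R))) => /=; lia.
Qed.

Lemma isL_uniq (V V1 : lmodType C) (a : Dact V) (a1 : Dact V1) c h l :
  is_L a c h l -> is_L a1 c h l -> exists psi, DisoF a a1 psi.
Proof.
case=> Ha Ia [v Hv] [Ha1 Ia1 [v1 Hv1]].
exact: (hw_unique Ha Ha1 Ia Ia1 Hv Hv1).
Qed.

Lemma back1_gen (V V1 : lmodType C) (a : Dact V) (a1 : Dact V1) c h l al be al1 be1 (n : int) :
  is_L a c h l -> is_L a1 c h l -> al - al1 = n%:~R ->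
  be = be1 \/ (be = 0 /\ be1 = -1) ->
  Diso (tensA' a al be) (tensA' a1 al1 be1).
Proof.
move=> La La1 Hn Hbe.
have [psi Hpsi] := isL_uniq La La1.
have Ha : is_Dmodule a by case: La.
have Ha1 : is_Dmodule a1 by case: La1.
have Hal : al = al1 + n%:~R by rewrite -Hn addrC subrK.
have Hj : forall j : int, (al == (j + n)%:~R) = (al1 == j%:~R).
  by move=> j; rewrite Hal intrD (inj_eq (addIr _)).
case: Hbe => [<-|[-> ->]].
- apply: (isoA'_gen Ha Ha1 Hpsi (n := n) (mu := fun _ => 1)).
  + move=> j; rewrite /idxA'; split=> H [E1 E2]; apply: H; split=> //;
      apply/eqP; [rewrite Hj|rewrite -Hj]; exact/eqP.
  + by move=> j _; rewrite oner_eq0.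
  + by move=> m j _ _; rewrite Hal !intrB !intrD; ring.
- apply: (isoA'_gen Ha Ha1 Hpsi (n := n) (mu := fun j => al1 - j%:~R)).
  + move=> j; rewrite /idxA'; split=> H [E1 E2]; apply: H; split; try by [left|right].
      by apply/eqP; rewrite Hj; exact/eqP.
    by apply/eqP; rewrite -Hj; exact/eqP.
  + move=> j H; rewrite subr_eq0; apply/eqP => E; apply: H; split=> //; by right.
  + by move=> m j _ _; rewrite Hal !intrB !intrD; ring.
Qed.

Lemma back1 (V V1 : lmodType C) (a : Dact V) (a1 : Dact V1) c h l al be al1 be1 (n : int) :
  is_L a c h l -> is_L a1 c h l -> al - al1 = n%:~R ->
  (be = be1 \/ (be = 0 /\ be1 = -1) \/ (be = -1 /\ be1 = 0)) ->
  Diso (tensA' a al be) (tensA' a1 al1 be1).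
Proof.
move=> La La1 Hn [E|[E|[E1 E2]]]; try by apply: (back1_gen La La1 Hn); tauto.
apply: Diso_sym; apply: (back1_gen (n := - n) La1 La); last by right; split.
by rewrite intrN -Hn opprB.
Qed.

Lemma back2 (V V1 : lmodType C) (a : Dact V) (a1 : Dact V1) c h l al be ga al1 (n : int) :
  ga != 0 -> is_L a c h l -> is_L a1 c h l -> al - al1 = n%:~R / 2%:R ->
  Diso (tensA a al be ga) (tensA a1 al1 be ga).
Proof.
move=> ga0 La La1 Hn.
have [psi Hpsi] := isL_uniq La La1.
have Ha : is_Dmodule a by case: La.
have Ha1 : is_Dmodule a1 by case: La1.
have Hal : al = al1 + n%:~R / 2%:R by rewrite -Hn addrC subrK.
apply: (isoA_gen Ha Ha1 Hpsi (n := n)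
   (mu := fun j => if oddz n then (if oddz j then 1 else ga) else 1)).
- by move=> j; case: ifP => _; [case: ifP => _|]; rewrite ?oner_eq0.
- move=> m j; rewrite oddz_2m; congr (_ * _).
  by rewrite Hal !intrB !intrD intrM; field.
- move=> k j; rewrite oddz_odd oddz_odd1.
  by case: (oddz j); case: (oddz n) => /=; rewrite ?mulr1 ?mul1r.
Qed.

Lemma scal_cancel (W : lmodType C) (u : W) (x y : C) : u != 0 -> x *: u = y *: u -> x = y.
Proof.
move=> un0 /eqP; rewrite -subr_eq0 -scalerBl scaler_eq0 (negbTE un0) orbF subr_eq0.
by move/eqP.
Qed.

Lemma quad0 (r0 r1 r2 : C) (N : int) :
  (forall x : int, N <= x -> r0 + r1 * x%:~R + r2 * x%:~R ^+ 2 = 0) ->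
  [/\ r0 = 0, r1 = 0 & r2 = 0].
Proof.
move=> H.
have e0 := H N (lexx _); have e1 := H (N + 1) ltac:(lia); have e2 := H (N + 2) ltac:(lia).
rewrite !intrD in e1 e2.
set X := N%:~R in e0 e1 e2.
have E2 : 2%:R * r2 = 0.
  have -> : 2%:R * r2 = (r0 + r1 * (X + 2%:~R) + r2 * (X + 2%:~R) ^+ 2)
     - 2%:R * (r0 + r1 * (X + 1%:~R) + r2 * (X + 1%:~R) ^+ 2) + (r0 + r1 * X + r2 * X ^+ 2).
    by ring.
  by rewrite e0 e1 e2; ring.
have r20 : r2 = 0.
  by move/eqP: E2; rewrite mulf_eq0 pnatr_eq0 /= => /eqP.
have r10 : r1 = 0.
  have -> : r1 = (r0 + r1 * (X + 1%:~R) + r2 * (X + 1%:~R) ^+ 2)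
     - (r0 + r1 * X + r2 * X ^+ 2) - r2 * (2%:R * X + 1).
    by ring.
  by rewrite e0 e1 r20; ring.
split=> //; move: e0; rewrite r10 r20; move=> e0; rewrite -e0; ring.
Qed.

Lemma lin2 (r0 r1 : C) (N : int) :
  (forall x : int, N <= x -> r0 + r1 * x%:~R = 0) -> r0 = 0 /\ r1 = 0.
Proof.
move=> H; have [] := @quad0 r0 r1 0 N; last by move=> -> ->.
by move=> x Hx; rewrite mul0r addr0; apply: H.
Qed.

Section LFS.
Variables (V : lmodType C) (a : Dact V) (Ha : is_Dmodule a) (Ia : irreducible_Dmod a).
Variables (c h l : C) (v : V) (Hv : hw_vector a c h l v).

Lemma LF_seq (s : seq int) (F : int -> V) : exists N : int, 0 <= N /\
  forall n, N <= n -> forall j, j \in s -> dop a n (F j) = 0 /\ hop a n (F j) = 0.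
Proof.
elim: s => [|x s [N2 [N20 H2]]]; first by exists 0.
have [N1 [N10 H1]] := LF Ha Ia Hv (F x).
exists (N1 + N2); split; first lia.
move=> n Hn j; rewrite inE; case/orP => [/eqP ->|js].
  by apply: H1; lia.
by apply: H2 => //; lia.
Qed.

Lemma LF_fs (I : int -> Prop) (f : FS V I) : exists N : int, 0 <= N /\
  forall n, N <= n -> forall j, dop a n (val f j) = 0 /\ hop a n (val f j) = 0.
Proof.
have [[s Hs] _] := fsP f.
have [N [N0 HN]] := LF_seq s (val f).
exists N; split=> // n Hn j.
case: (boolP (j \in s)) => js; first exact: HN.
by rewrite Hs // (lin0 (dopL Ha n)) (lin0 (hopL Ha n)).
Qed.
End LFS.

Lemma fs_nz (V : lmodType C) I (g : FS V I) : g != 0 -> exists j, val g j != 0.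
Proof.
move=> gn0; case: (pselect (exists j, val g j != 0)) => // Hn.
exfalso; move/negP: gn0; apply; apply/eqP; apply: fs_ext => j.
case: (eqVneq (val g j) 0) => // E; exfalso; apply: Hn; by exists j.
Qed.


Lemma DisoF_nz (V W : lmodType C) (a : Dact V) (b : Dact W) f x :
  DisoF a b f -> x != 0 -> f x != 0.
Proof.
case=> L [g fK gK] _ _ _ xn0; apply/negP => /eqP E; move/negP: xn0; apply; apply/eqP.
by apply: (can_inj fK); rewrite E (lin0 L).
Qed.

Lemma part3 (V V1 : lmodType C) (a : Dact V) (a1 : Dact V1) c h l c1 h1 l1 al be ga al1 be1 :
  is_L a c h l -> is_L a1 c1 h1 l1 -> ~ Diso (tensA a al be ga) (tensA' a1 al1 be1).
Proof.
case=> Ha Ia [v Hv] [Ha1 Ia1 [v1 Hv1]] /Diso_DisoF [phi Hphi].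
have vn0 : v != 0 by case: Hv.
pose f0 := dl allI 0 v.
have f0E : val f0 = fun j => if j == 0 then v else 0 by apply: dlE.
have [N [N0 HN]] := LF_fs Ha1 Ia1 Hv1 (phi f0).
pose X := hop (tensA a al be ga) N f0.
have X0 : phi X = 0.
  have [_ _ _ H _] := Hphi.
  rewrite /X H; apply: fs_ext => j; rewrite (tA'h Ha1) /=.
  exact: (HN N (lexx _) j).2.
have Xn0 : X != 0.
  apply/negP => /eqP E.
  have := congr1 (fun f => val f (2 * N + 1)) E.
  rewrite /X (tAh Ha) f0E /= subrr eqxx /=.
  have -> : (2 * N + 1 == 0) = false by apply/negbTE; lia.
  rewrite (lin0 (hopL Ha N)) add0r scale1r => /eqP; apply/negP; exact: vn0.
by move/negP: (DisoF_nz Hphi Xn0); apply; rewrite X0.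
Qed.

Definition sc (ga : C) (x : int) : C := if oddz x then ga else 1.

Lemma sc_par ga x y : oddz (y - x) -> sc ga y * sc ga x = ga.
Proof.
rewrite /sc /oddz => H.
have : odd (absz y) = ~~ odd (absz x).
  move: H; case: (boolP (odd (absz x))); case: (boolP (odd (absz y))) => /=; lia.
by case: (odd (absz x)) => -> /=; rewrite ?mulr1 ?mul1r.
Qed.

Lemma sc_nz ga x : ga != 0 -> sc ga x != 0.
Proof. by rewrite /sc; case: ifP => // _ _; rewrite oner_eq0. Qed.

Lemma valZ (V : lmodType C) I (f : FS V I) k j : val (k *: f) j = k *: val f j.
Proof. by []. Qed.
Lemma valD (V : lmodType C) I (f g : FS V I) j : val (f + g) j = val f j + val g j.
Proof. by []. Qed.

Lemma fs_eqj (V : lmodType C) I (f g : FS V I) j : f = g -> val f j = val g j.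
Proof. by move=> ->. Qed.

Section Ex2.
Variables (V V1 : lmodType C) (a : Dact V) (a1 : Dact V1).
Variables (c h l c1 h1 l1 al be ga al1 be1 ga1 : C).
Hypotheses (ga0 : ga != 0) (ga10 : ga1 != 0).
Hypotheses (La : is_L a c h l) (La1 : is_L a1 c1 h1 l1).
Variables (phi : FS V allI -> FS V1 allI).
Hypothesis Hphi : DisoF (tensA a al be ga) (tensA a1 al1 be1 ga1) phi.

Lemma extract2 : [/\ be = be1, ga = ga1, c = c1, l = l1 &
  (exists n : int, al - al1 = n%:~R / 2%:R) /\ exists j : nat, h = h1 + j%:R / 2%:R].
Proof.
case: La => Ha Ia [v Hv]; case: La1 => Ha1 Ia1 [v1 Hv1].
have [vn0 Hd0 Hc Hl [Hdp Hhp]] := Hv.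
have [L _ PD PH [PC PL]] := Hphi.
pose j0 : int := if al == 0 then 1 else 0.
pose A := al - j0%:~R / 2%:R.
have A0 : A != 0.
  rewrite /A /j0; case: (eqVneq al 0) => [->|H]; last by rewrite mul0r subr0.
  by rewrite sub0r oppr_eq0 mulr1z mul1r invr_eq0 pnatr_eq0.
pose f0 := dl allI j0 v.
have f0E : val f0 = fun j => if j == j0 then v else 0 by apply: dlE.
have f0n0 : f0 != 0.
  apply/negP => /eqP E; have := congr1 (fun f => val f j0) E; rewrite f0E eqxx /=.
  by move/eqP; apply/negP.
pose g := phi f0.
have gn0 : g != 0 by apply: DisoF_nz Hphi f0n0.
have [j1 un0] := fs_nz gn0.
set u := val g j1 in un0.
have [N [N0 HN]] := LF_fs Ha1 Ia1 Hv1 g.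
have hv0 : forall k (b : bool), 0 <= k -> hop a k (if b then v else 0) = 0.
  by move=> k [] k0; [apply: Hhp|apply: (lin0 (hopL Ha k))].
have dv0 : forall m (b : bool), 0 < m -> dop a m (if b then v else 0) = 0.
  by move=> m [] m0; [apply: Hdp|apply: (lin0 (dopL Ha m))].
have I1 : forall m k, 0 < m -> 0 <= k ->
    dop (tensA a al be ga) m (hop (tensA a al be ga) k f0) = (A - Defs.half k + be * m%:~R) *: hop (tensA a al be ga) (k + m) f0.
  move=> m k m0 k0; apply: fs_ext => j.
  have km0 : 0 <= k + m by lia.
  rewrite valZ (tAd Ha) !(tAh Ha) /= f0E !(hv0 k _ k0) !(hv0 (k + m) _ km0) !add0r.
  rewrite (linZ (dopL Ha m)) dv0 // scaler0 add0r !scalerA.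
  have -> : j - 2 * m - (2 * k + 1) = j - (2 * (k + m) + 1) by ring.
  case: eqP => E; last by rewrite !scaler0.
  have Ej : j = j0 + (2 * (k + m) + 1) by lia.
  congr (_ *: _); congr (_ * _).
  by rewrite Ej /A /Defs.half !intrB !intrD !intrM; field.
have I2 : forall k k', 0 <= k -> 0 <= k' ->
    (A + be * (k + k' + 1)%:~R) *: hop (tensA a al be ga) k (hop (tensA a al be ga) k' f0) = ga *: dop (tensA a al be ga) (k + k' + 1) f0.
  move=> k k' k0 k'0; apply: fs_ext => j.
  rewrite !valZ (tAh Ha) !(tAh Ha) (tAd Ha) /= f0E !(hv0 k' _ k'0) !add0r.
  rewrite (linZ (hopL Ha k)) (hv0 k _ k0) scaler0 add0r dv0 ?add0r; last lia.
  rewrite !scalerA.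
  have -> : j - (2 * k + 1) - (2 * k' + 1) = j - 2 * (k + k' + 1) by ring.
  case: eqP => E; last by rewrite !scaler0.
  have Ej : j = j0 + 2 * (k + k' + 1) by lia.
  congr (_ *: _).
  rewrite E; have := @sc_par ga j0 (j - (2 * k + 1)); rewrite /sc => ->; last first.
    rewrite Ej /oddz; lia.
  by rewrite /A; ring.
have I3 : cop (tensA a al be ga) f0 = c *: f0.
  apply: fs_ext => j; rewrite valZ (tAc Ha) f0E /=.
  by case: ifP => _; [exact: Hc|rewrite (lin0 (copL Ha)) scaler0].
have I3l : lop (tensA a al be ga) f0 = l *: f0.
  apply: fs_ext => j; rewrite valZ (tAl Ha) f0E /=.
  by case: ifP => _; [exact: Hl|rewrite (lin0 (lopL Ha)) scaler0].
have I4 : dop (tensA a al be ga) 0 f0 = (h + A) *: f0.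
  apply: fs_ext => j; rewrite valZ (tAd Ha) f0E /=.
  have -> : j - 2 * 0 = j by ring.
  case: eqP => E; last by rewrite (lin0 (dopL Ha 0)) !scaler0 addr0.
  rewrite Hd0 -scalerDl E; congr (_ *: _).
  by rewrite /A; ring.
pose M1 := tensA a1 al1 be1 ga1.
have Pg1 : forall m k, 0 < m -> 0 <= k ->
    dop M1 m (hop M1 k g) = (A - Defs.half k + be * m%:~R) *: hop M1 (k + m) g.
  by move=> m k m0 k0; rewrite /g -PH -PD I1 // (linZ L) PH.
have Pg2 : forall k k', 0 <= k -> 0 <= k' ->
    (A + be * (k + k' + 1)%:~R) *: hop M1 k (hop M1 k' g) = ga *: dop M1 (k + k' + 1) g.
  by move=> k k' k0 k'0; rewrite /g -!PH -(linZ L) I2 // (linZ L) PD.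
have Pg3 : c *: g = c1 *: g.
  rewrite /g -(linZ L) -I3 PC; apply: fs_ext => j.
  by rewrite (tAc Ha1) valZ /= (c_scal Ha1 Ia1 Hv1).
have Pg3l : l *: g = l1 *: g.
  rewrite /g -(linZ L) -I3l PL; apply: fs_ext => j.
  by rewrite (tAl Ha1) valZ /= (l_scal Ha1 Ia1 Hv1).
have Pg4 : dop M1 0 g = (h + A) *: g by rewrite /g -PD I4 (linZ L).
have gh : forall k j, N <= k ->
    val (hop M1 k g) j = sc ga1 (j - (2 * k + 1)) *: val g (j - (2 * k + 1)).
  by move=> k j Hk; rewrite (tAh Ha1) /= (HN k Hk j).2 add0r.
have gd : forall m (X : FS V1 allI) j, (forall j, dop a1 m (val X j) = 0) ->
    val (dop M1 m X) j = (al1 + be1 * m%:~R - (j - 2 * m)%:~R / 2%:R) *: val X (j - 2 * m).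
  by move=> m X j H; rewrite (tAd Ha1) /= H add0r.
have gh2 : forall k (X : FS V1 allI) j, (forall j, hop a1 k (val X j) = 0) ->
    val (hop M1 k X) j = sc ga1 (j - (2 * k + 1)) *: val X (j - (2 * k + 1)).
  by move=> k X j H; rewrite (tAh Ha1) /= H add0r.
have killed : forall k m j, N <= k -> N <= m -> dop a1 m (val (hop M1 k g) j) = 0.
  by move=> k m j Hk Hm; rewrite gh // (linZ (dopL Ha1 m)) (HN m Hm _).1 scaler0.
pose a' := al1 - j1%:~R / 2%:R.
have sc1n0 : sc ga1 j1 != 0 by apply: sc_nz.
have E1 : forall m, N + 1 <= m -> (a' - A) + (be1 - be) * m%:~R = 0.
  move=> m Hm.
  have := fs_eqj (j1 + (2 * (N + m) + 1)) (Pg1 m N ltac:(lia) N0).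
  rewrite gd; last by move=> j; apply: killed; lia.
  rewrite valZ !gh; try lia.
  have -> : j1 + (2 * (N + m) + 1) - 2 * m - (2 * N + 1) = j1 by ring.
  have -> : j1 + (2 * (N + m) + 1) - (2 * (N + m) + 1) = j1 by ring.
  rewrite !scalerA => /(scal_cancel un0) /(mulIf sc1n0) /eqP; rewrite -subr_eq0 => /eqP H.
  by rewrite -H /a' /A /Defs.half !(intrB, intrD, intrM); field.
have [aA bb] := lin2 E1.
have aA' : a' = A by apply/eqP; rewrite -subr_eq0 aA.
have be1E : be1 = be by apply/eqP; rewrite -subr_eq0 bb.
have E2 : forall k, N <= k -> (A + be * (k + N + 1)%:~R) * (ga1 - ga) = 0.
  move=> k Hk.
  have := fs_eqj (j1 + 2 * (k + N + 1)) (Pg2 k N ltac:(lia) N0).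
  rewrite !valZ gd; last by move=> j; exact: (HN (k + N + 1) ltac:(lia) j).1.
  rewrite gh2; last first.
    by move=> j; rewrite gh // (linZ (hopL Ha1 k)) (HN k Hk _).2 scaler0.
  rewrite gh //.
  have -> : j1 + 2 * (k + N + 1) - (2 * k + 1) - (2 * N + 1) = j1 by ring.
  have -> : j1 + 2 * (k + N + 1) - 2 * (k + N + 1) = j1 by ring.
  rewrite !scalerA => /(scal_cancel un0).
  rewrite sc_par; last by rewrite /oddz; lia.
  move=> H; rewrite mulrBr H.
  have -> : al1 + be1 * (k + N + 1)%:~R - j1%:~R / 2%:R = a' + be1 * (k + N + 1)%:~R.
    by rewrite /a'; ring.
  by rewrite aA' be1E; ring.
have gaE : ga = ga1.
  case: (eqVneq ga ga1) => // gne; exfalso.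
  have E2' : forall k, N <= k -> (A + be * (N + 1)%:~R) + be * k%:~R = 0.
    move=> k Hk; have := E2 k Hk; move/eqP; rewrite mulf_eq0 subr_eq0 [ga1 == _]eq_sym (negbTE gne) orbF.
    by move/eqP => H; rewrite -H !intrD; ring.
  have [H1 H2] := lin2 E2'.
  move/negP: A0; apply; apply/eqP; by rewrite -H1 H2; ring.
have cE : c = c1 by apply: (scal_cancel gn0).
have lE : l = l1 by apply: (scal_cancel gn0).
have hE : exists j : nat, h = h1 + j%:R / 2%:R.
  have := fs_eqj j1 Pg4.
  rewrite valZ (tAd Ha1).
  have -> : j1 - 2 * 0 = j1 by ring.
  rewrite mulr0z mulr0 addr0 -aA' => H.
  have H' : dop a1 0 u = h *: u by apply: (addIr (a' *: u)); rewrite -scalerDl; exact: H.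
  exact: (weight Ha1 Ia1 Hv1 un0 H').
split=> //; split=> //.
exists (j0 - j1).
have E : al - al1 = (al - al1) + (a' - A) by rewrite aA' subrr addr0.
by rewrite E /a' /A intrB; ring.
Qed.
End Ex2.

Lemma ifZ (W : lmodType C) (b : bool) (x : C) (y : W) :
  (if b then x *: y else 0) = (if b then x else 0) *: y.
Proof. by case: b; rewrite ?scale0r. Qed.

Lemma eq_via (x y x' y' : C) : x' = y' -> x = x' -> y' = y -> x = y.
Proof. by move=> H -> <-. Qed.

Lemma pick_j0 al be : exists j0 : int, al - j0%:~R != 0 /\
  forall n, 0 <= n -> idxA' al be (j0 + n).
Proof.
case: (pselect (exists z : int, al = z%:~R /\ (be = 0 \/ be = -1))) => [[z [Ez Hb]]|Hn].
  exists (z + 1); split.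
    by rewrite Ez intrD opprD addrA subrr sub0r oppr_eq0 oner_eq0.
  move=> n n0 [E _]; move: E; rewrite Ez => /eqP; rewrite eqr_int => /eqP; lia.
exists (if al == 0 then 1 else 0); split.
  case: (eqVneq al 0) => [->|H]; last by rewrite subr0.
  by rewrite sub0r oppr_eq0 mulr1z oner_eq0.
move=> n _ [E Hb]; apply: Hn; by exists ((if al == 0 then 1 else 0) + n).
Qed.

Lemma idx_tail al be (j1 : int) : exists N : int, 0 <= N /\
  forall n, N <= n -> idxA' al be (j1 + n).
Proof.
case: (pselect (exists z : int, al = z%:~R /\ (be = 0 \/ be = -1))) => [[z [Ez Hb]]|Hn].
  exists ((absz (z - j1))%:Z + 1); split; first lia.
  move=> n Hn [E _]; move: E; rewrite Ez => /eqP; rewrite eqr_int => /eqP; lia.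
by exists 0; split=> // n _ [E Hb]; apply: Hn; exists (j1 + n).
Qed.

Section Ex1.
Variables (V V1 : lmodType C) (a : Dact V) (a1 : Dact V1).
Variables (c h l c1 h1 l1 al be al1 be1 : C).
Hypotheses (La : is_L a c h l) (La1 : is_L a1 c1 h1 l1).
Variables (phi : FS V (idxA' al be) -> FS V1 (idxA' al1 be1)).
Hypothesis Hphi : DisoF (tensA' a al be) (tensA' a1 al1 be1) phi.

Lemma extract1 : [/\ c = c1, l = l1, (exists n : int, al - al1 = n%:~R),
  (be = be1 \/ (be = 0 /\ be1 = -1) \/ (be = -1 /\ be1 = 0)) &
  exists j : nat, h = h1 + j%:R / 2%:R].
Proof.
case: La => Ha Ia [v Hv]; case: La1 => Ha1 Ia1 [v1 Hv1].
have [vn0 Hd0 Hc Hl [Hdp Hhp]] := Hv.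
have [L _ PD PH [PC PL]] := Hphi.
have [j0 [A0 Hj0]] := pick_j0 al be.
pose A := al - j0%:~R.
have Ij0 : idxA' al be j0 by have := Hj0 0 (lexx _); rewrite addr0.
pose f0 := dl (idxA' al be) j0 v.
have f0E : val f0 = fun j => if j == j0 then v else 0 by apply: dlE.
have f0n0 : f0 != 0.
  apply/negP => /eqP E; have := fs_eqj j0 E; rewrite f0E eqxx /=.
  by move/eqP; apply/negP.
pose g := phi f0.
have gn0 : g != 0 by apply: DisoF_nz Hphi f0n0.
have [j1 un0] := fs_nz gn0.
set u := val g j1 in un0.
have Ij1 : idxA' al1 be1 j1.
  case: (pselect (idxA' al1 be1 j1)) => // H; move/negP: un0; case; apply/eqP.
  exact: (fsP g).2 _ H.
have [N1 [N10 HN]] := LF_fs Ha1 Ia1 Hv1 g.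
have [N2 [N20 HI2]] := idx_tail al1 be1 j1.
pose N := N1 + N2 + 1.
have dv0 : forall m (b : bool), 0 < m -> dop a m (if b then v else 0) = 0.
  by move=> m [] m0; [apply: Hdp|apply: (lin0 (dopL Ha m))].
have I1 : forall m n, 0 < m -> 0 < n ->
    (A + be * (m + n)%:~R) *: dop (tensA' a al be) m (dop (tensA' a al be) n f0) =
    ((A + be * n%:~R) * (A - n%:~R + be * m%:~R)) *: dop (tensA' a al be) (m + n) f0.
  move=> m n m0 n0; apply: fs_ext => j.
  have mn0 : 0 < m + n by lia.
  rewrite !valZ (tA'd Ha) !(tA'd Ha) /= f0E !ifZ !(dv0 n _ n0) (dv0 (m + n) _ mn0) !add0r.
  rewrite (linZ (dopL Ha m)) (dv0 m _ m0) scaler0 add0r !scalerA.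
  have -> : j - m - n = j - (m + n) by ring.
  case: eqP => E; last by rewrite !scaler0.
  have Ej : j = j0 + (m + n) by lia.
  have Ij : idxA' al be j by rewrite Ej; apply: Hj0; lia.
  have Ijm : idxA' al be (j - m).
    have -> : j - m = j0 + n by lia.
    apply: Hj0; lia.
  rewrite !asboolT //; congr (_ *: _).
  by rewrite Ej /A !(intrB, intrD); ring.
have I3 : cop (tensA' a al be) f0 = c *: f0.
  apply: fs_ext => j; rewrite valZ (tA'c Ha) f0E /=.
  by case: ifP => _; [exact: Hc|rewrite (lin0 (copL Ha)) scaler0].
have I3l : lop (tensA' a al be) f0 = l *: f0.
  apply: fs_ext => j; rewrite valZ (tA'l Ha) f0E /=.
  by case: ifP => _; [exact: Hl|rewrite (lin0 (lopL Ha)) scaler0].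
have I4 : dop (tensA' a al be) 0 f0 = (h + A) *: f0.
  apply: fs_ext => j; rewrite valZ (tA'd Ha) f0E /= ifZ.
  have -> : j - 0 = j by ring.
  case: eqP => E; last by rewrite (lin0 (dopL Ha 0)) !scaler0 addr0.
  rewrite E asboolT // Hd0 -scalerDl; congr (_ *: _).
  by rewrite /A mulr0z mulr0 addr0.
pose M1 := tensA' a1 al1 be1.
have Pg1 : forall m n, 0 < m -> 0 < n ->
    (A + be * (m + n)%:~R) *: dop M1 m (dop M1 n g) =
    ((A + be * n%:~R) * (A - n%:~R + be * m%:~R)) *: dop M1 (m + n) g.
  by move=> m n m0 n0; rewrite /g -!PD -(linZ L) I1 // (linZ L) PD.
have Pg3 : c *: g = c1 *: g.
  rewrite /g -(linZ L) -I3 PC; apply: fs_ext => j.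
  by rewrite (tA'c Ha1) valZ /= (c_scal Ha1 Ia1 Hv1).
have Pg3l : l *: g = l1 *: g.
  rewrite /g -(linZ L) -I3l PL; apply: fs_ext => j.
  by rewrite (tA'l Ha1) valZ /= (l_scal Ha1 Ia1 Hv1).
have Pg4 : dop M1 0 g = (h + A) *: g by rewrite /g -PD I4 (linZ L).
have gd : forall m (X : FS V1 (idxA' al1 be1)) j, (forall j, dop a1 m (val X j) = 0) ->
    val (dop M1 m X) j = (if `[< idxA' al1 be1 j >] then al1 + be1 * m%:~R - (j - m)%:~R
      else 0) *: val X (j - m).
  by move=> m X j H; rewrite (tA'd Ha1) /= H add0r ifZ.
have killed : forall n m j, N1 <= n -> N1 <= m -> dop a1 m (val (dop M1 n g) j) = 0.
  move=> n m j Hn Hm; rewrite gd; last by move=> j'; exact: (HN n Hn j').1.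
  by rewrite (linZ (dopL Ha1 m)) (HN m Hm _).1 scaler0.
pose a' := al1 - j1%:~R.
have EQ : forall m n, N <= m -> N <= n ->
    (A + be * (m%:~R + n%:~R)) * ((a' - n%:~R + be1 * m%:~R) * (a' + be1 * n%:~R)) =
    ((A + be * n%:~R) * (A - n%:~R + be * m%:~R)) * (a' + be1 * (m%:~R + n%:~R)).
  move=> m n Hm Hn.
  have := fs_eqj (j1 + (m + n)) (Pg1 m n ltac:(lia) ltac:(lia)).
  rewrite !valZ gd; last by move=> j; apply: killed; lia.
  rewrite gd; last by move=> j; exact: (HN n ltac:(lia) j).1.
  rewrite gd; last by move=> j; exact: (HN (m + n) ltac:(lia) j).1.
  have -> : j1 + (m + n) - m = j1 + n by ring.
  have -> : j1 + n - n = j1 by ring.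
  have -> : j1 + (m + n) - (m + n) = j1 by ring.
  rewrite !asboolT; try by apply: HI2; lia.
  rewrite !scalerA => /(scal_cancel un0) H.
  move: H; rewrite /a' !(intrB, intrD) => H.
  by apply: (eq_via H); ring.
have Q : forall n, N <= n ->
    [/\ (a' + be1 * n%:~R) * (A + be * n%:~R) * (a' - A) = 0,
        be1 * (A + be * n%:~R) * ((a' + be1 * n%:~R) - (A - n%:~R)) +
          be * (a' + be1 * n%:~R) * ((a' - n%:~R) - (A + be * n%:~R)) = 0 &
        be * be1 * ((a' + be1 * n%:~R) - (A + be * n%:~R)) = 0].
  move=> n Hn; apply: (quad0 (N := N)) => m Hm.
  have := EQ m n Hm Hn; move/eqP; rewrite -subr_eq0 => /eqP H.
  by apply: (eq_via H); ring.
have aA : a' = A.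
  case: (eqVneq a' A) => // aneq; exfalso.
  have KL : forall n, N <= n -> a' * A + (a' * be + A * be1) * n%:~R + (be * be1) * n%:~R ^+ 2 = 0.
    move=> n Hn; have [H _ _] := Q n Hn; move/eqP: H.
    rewrite mulf_eq0 subr_eq0 (negbTE aneq) orbF => /eqP H.
    by apply: (eq_via H); ring.
  have [H1 H2 _] := quad0 KL.
  have a0 : a' = 0 by move/eqP: H1; rewrite mulf_eq0 (negbTE A0) orbF => /eqP.
  move: H2; rewrite a0 mul0r add0r => /eqP; rewrite mulf_eq0 (negbTE A0) /= => /eqP b10.
  apply: Ij1; split; last by left.
  by apply/eqP; rewrite -subr_eq0; apply/eqP.
have Q1 : forall n, N <= n -> 0 + (A * (be1 - be) * (1 + be + be1)) * n%:~R
    + (be * be1 * (be1 - be)) * n%:~R ^+ 2 = 0.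
  move=> n Hn; have [_ H _] := Q n Hn; rewrite aA in H.
  by apply: (eq_via H); ring.
have [_ R1 R2] := quad0 Q1.
have beE : be = be1 \/ (be = 0 /\ be1 = -1) \/ (be = -1 /\ be1 = 0).
  case: (eqVneq be1 be) => [->|bne]; first by left.
  right.
  have s0 : 1 + be + be1 = 0.
    by move/eqP: R1; rewrite !mulf_eq0 (negbTE A0) subr_eq0 (negbTE bne) /= => /eqP.
  move/eqP: R2; rewrite !mulf_eq0 subr_eq0 (negbTE bne) orbF => /orP[/eqP b0|/eqP b10].
    left; split=> //; apply/eqP; rewrite -(subr_eq0 be1) -[be1 - _]add0r -{1}b0 -s0.
    by apply/eqP; ring.
  right; split=> //; apply/eqP; rewrite -subr_eq0; apply/eqP; rewrite -s0 b10; ring.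
have cE : c = c1 by apply: (scal_cancel gn0).
have lE : l = l1 by apply: (scal_cancel gn0).
have hE : exists j : nat, h = h1 + j%:R / 2%:R.
  have := fs_eqj j1 Pg4.
  rewrite valZ (tA'd Ha1) asboolT //.
  have -> : j1 - 0 = j1 by ring.
  rewrite mulr0z mulr0 addr0 -aA => H.
  have H' : dop a1 0 u = h *: u by apply: (addIr (a' *: u)); rewrite -scalerDl; exact: H.
  exact: (weight Ha1 Ia1 Hv1 un0 H').
split=> //.
exists (j0 - j1).
have E : al - al1 = (al - al1) + (a' - A) by rewrite aA subrr addr0.
by rewrite E /a' /A intrB; ring.
Qed.
End Ex1.

End Helpers.
Import Helpers.


Lemma hh_eq (h h1 : C) (j j' : nat) : h = h1 + j%:R / 2%:R -> h1 = h + j'%:R / 2%:R -> h = h1.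
Proof.
move=> E1 E2.
have H : (j + j')%:R / 2%:R = 0 :> C.
  rewrite natrD mulrDl.
  have -> : j%:R / 2%:R = h - h1 :> C by rewrite E1; ring.
  have -> : j'%:R / 2%:R = h1 - h :> C by rewrite E2; ring.
  ring.
move/eqP: H; rewrite mulf_eq0 invr_eq0 !pnatr_eq0 /= orbF addn_eq0 => /andP[/eqP j0 _].
by rewrite E1 j0 mul0r addr0.
Qed.

Theorem theorem4p4 (c h l al be c1 h1 l1 al1 be1 ga ga1 : C)
    (V V1 : lmodType C) (a : Dact V) (a1 : Dact V1) :
  ga != 0 -> ga1 != 0 -> is_L a c h l -> is_L a1 c1 h1 l1 ->
  [/\ (Diso (tensA' a al be) (tensA' a1 al1 be1) <->
         [/\ (c, h, l) = (c1, h1, l1), (exists n : int, al - al1 = n%:~R) &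
             (be = be1 \/ (be = 0 /\ be1 = -1) \/ (be = -1 /\ be1 = 0))]),
      (Diso (tensA a al be ga) (tensA a1 al1 be1 ga1) <->
         (be, ga, c, h, l) = (be1, ga1, c1, h1, l1) /\
         (exists n : int, al - al1 = n%:~R / 2%:R)) &
      ~ Diso (tensA a al be ga) (tensA' a1 al1 be1)].
Proof.
move=> ga0 ga10 La La1; split.
- split.
  + move=> D.
    have [phi Hphi] := Diso_DisoF D.
    have [psi Hpsi] := Diso_DisoF (Diso_sym D).
    have [cE lE Hal Hbe [j hj]] := extract1 La La1 Hphi.
    have [_ _ _ _ [j' hj']] := extract1 La1 La Hpsi.
    by split=> //; rewrite cE lE (hh_eq _ _ _ _ hj hj').
  + case=> [[E1 E2 E3] [n Hn] Hb]; rewrite -E1 -E2 -E3 in La1.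
    exact: back1 La La1 Hn Hb.
- split.
  + move=> D.
    have [phi Hphi] := Diso_DisoF D.
    have [psi Hpsi] := Diso_DisoF (Diso_sym D).
    have [bE gE cE lE [Hal [j hj]]] := extract2 ga0 ga10 La La1 Hphi.
    have [_ _ _ _ [_ [j' hj']]] := extract2 ga10 ga0 La1 La Hpsi.
    by split=> //; rewrite bE gE cE lE (hh_eq _ _ _ _ hj hj').
  + case=> [[E1 E2 E3 E4 E5] [n Hn]]; rewrite -E3 -E4 -E5 in La1; rewrite -E1 -E2.
    exact: back2 ga0 La La1 Hn.
- exact: part3 La La1.
Qed.
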